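(* Let $R,LM,C,\widetilde C,Ceq,\widetilde{Ceq},\sim,\simeq$ be as below. (1) If conditions (1.2), (2b), (2c), (2d) and (4a) hold, then $\sim$ is an equivalence relation on $C$. (2) If in addition conditions (1.3), (3b), (3c), (3d), (4b) and (4c) hold, then $\simeq$ is an equivalence relation on $\widetilde C$. The conditions (for all well-formed data) are: (1.2) $(\Gamma,T\rhd)\Rightarrow(\Gamma\rhd)$; (1.3) $(\Gamma\vdash r:R)\Rightarrow(\Gamma,R\rhd)$; (2b) $(\Gamma,T\rhd)\Rightarrow(\Gamma\vdash T=T)$; (2c) $(\Gamma\vdash T=T')\Rightarrow(\Gamma\vdash T'=T)$; (2d) $(\Gamma\vdash T=T')\wedge(\Gamma\vdash T'=T'')\Rightarrow(\Gamma\vdash T=T'')$; (3b) $(\Gamma\vdash o:T)\Rightarrow(\Gamma\vdash o=o:T)$; (3c) $(\Gamma\vdash o=o':T)\Rightarrow(\Gamma\vdash o'=o:T)$; (3d) $(\Gamma\vdash o=o':T)\wedge(\Gamma\vdash o'=o'':T)\Rightarrow(\Gamma\vdash o=o'':T)$; (4a) $(\Gamma_1\vdash T=T')\wedge(\Gamma_1,T,\Gamma_2\vdash S=S')\Rightarrow(\Gamma_1,T',\Gamma_2\vdash S=S')$; (4b) $(\Gamma_1\vdash T=T')\wedge(\Gamma_1,T,\Gamma_2\vdash o=o':S)\Rightarrow(\Gamma_1,T',\Gamma_2\vdash o=o':S)$; (4c) $(\Gamma\vdash S=S')\wedge(\Gamma\vdash o=o':S)\Rightarrow(\Gamma\vdash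 o=o':S')$.
   Context: $[n]=\{1,\dots,n\}$; $R$ is a monad on Sets and $LM$ a left $R$-module with values in Sets. $C\subset\coprod_n\prod_{j=0}^{n-1}LM([j])$, $\widetilde C\subset\coprod_n(\prod_{j=0}^nLM([j]))\times R([n])$, $Ceq\subset\coprod_n(\prod_{j=0}^{n-1}LM([j]))\times LM([n])^2$, $\widetilde{Ceq}\subset\coprod_n(\prod_{j=0}^nLM([j]))\times R([n])^2$ are subsets. Contexts are sequences $\Gamma=(T_1,\dots,T_n)$, $T_j\in LM([j-1])$, $l(\Gamma)=n$, $ft$ drops the last entry; commas denote concatenation. $(\Gamma\rhd)$: $\Gamma\in C$; $(\Gamma\vdash t:T)$: $(\Gamma,T,t)\in\widetilde C$; $(\Gamma\vdash S=S')$: $(\Gamma,S,S')\in Ceq$; $(\Gamma\vdash o=o':S)$: $(\Gamma,S,o,o')\in\widetilde{Ceq}$. $\sim$ on $C$: $(T_1,\dots,T_n)\sim(T'_1,\dots,T'_n)$ iff $n=0$, or $ft$'s are $\sim$-related and $(T_1,\dots,T_{n-1}\vdash T_n=T'_n)$ (recursive; different lengths never related). $\simeq$ on $\widetilde C$: $(\Gamma\vdash o:S)\simeq(\Gamma'\vdash o':S')$ iff $(\Gamma,S)\sim(\Gamma',S')$ and $(\Gamma\vdash o=o':S)$. *)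

(* Defs.v *)
From mathcomp Require Import all_boot.
Set Implicit Arguments. Unset Strict Implicit. Unset Printing Implicit Defensive.

Record Monad := {
  mon :> Type -> Type;
  ret : forall X, X -> mon X;
  bind : forall X Y, mon X -> (X -> mon Y) -> mon Y;
  bind_ret_l : forall X Y (x : X) (f : X -> mon Y), bind (ret x) f = f x;
  bind_ret_r : forall X (m : mon X), bind m (@ret X) = m;
  bind_assoc : forall X Y Z (m : mon X) (f : X -> mon Y) (g : Y -> mon Z),
      bind (bind m f) g = bind m (fun x => bind (f x) g)
}.

Record LModule (R : Monad) := {
  lmod :> Type -> Type;
  lbind : forall X Y, lmod X -> (X -> R Y) -> lmod Y;
  lbind_ret : forall X (m : lmod X), lbind m (@ret R X) = m;
  lbind_assoc : forall X Y Z (m : lmod X) (f : X -> R Y) (g : Y -> R Z),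
      lbind (lbind m f) g = lbind m (fun x => bind (f x) g)
}.

(* [n] = {1,...,n} is represented by the n-element type 'I_n. *)

Section Contexts.
Variables (R : Monad) (LM : LModule R).

(* Ctx n = prod_{j=0}^{n-1} LM([j]);  a context (T_1,...,T_n), T_j in LM([j-1]). *)
Fixpoint Ctx (n : nat) : Type :=
  match n with 0 => unit | S n => (Ctx n * LM 'I_n)%type end.

(* Ext k m : sequences (T_{k+1},...,T_{k+m}) with T_j in LM([j-1]),
   i.e. possible continuations of a context of length k. *)
Fixpoint Ext (k m : nat) : Type :=
  match m with 0 => unit | S m => (Ext k m * LM 'I_(m + k))%type end.

Fixpoint cat_ctx (k m : nat) : Ctx k -> Ext k m -> Ctx (m + k) :=
  match m return Ctx k -> Ext k m -> Ctx (m + k) with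
  | 0 => fun G _ => G
  | S m => fun G D => (cat_ctx G D.1, D.2)
  end.

Variable C : forall n, Ctx n -> Prop.
Variable Ceq : forall n, Ctx n -> LM 'I_n -> LM 'I_n -> Prop.
Variable Ceqt : forall n, Ctx n -> LM 'I_n -> R 'I_n -> R 'I_n -> Prop.

(* the relation ~ on contexts of length n (different lengths never related) *)
Fixpoint ctx_sim (n : nat) : Ctx n -> Ctx n -> Prop :=
  match n return Ctx n -> Ctx n -> Prop with
  | 0 => fun _ _ => True
  | S n => fun G G' => ctx_sim G.1 G'.1 /\ Ceq G.1 G.2 G'.2
  end.

(* the relation ~= on judgements (Gamma |- o : S), Gamma of length n *)
Definition term_sim (n : nat) (x y : (Ctx n * LM 'I_n * R 'I_n)%type) : Prop :=
  @ctx_sim n.+1 (x.1.1, x.1.2) (y.1.1, y.1.2) /\ Ceqt x.1.1 x.1.2 x.2 y.2.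

End Contexts.

Definition equiv_on (A : Type) (P : A -> Prop) (r : A -> A -> Prop) : Prop :=
  [/\ (forall x, P x -> r x x),
      (forall x y, P x -> P y -> r x y -> r y x) &
      (forall x y z, P x -> P y -> P z -> r x y -> r y z -> r x z)].

(* Main.v *)
Require Import Defs.
From mathcomp Require Import all_boot.


Set Implicit Arguments. Unset Strict Implicit.

Section Transport.
Variables (R : Monad) (LM : LModule R).

Definition trC N N' (e : N = N') (X : Ctx LM N) : Ctx LM N' :=
  eq_rect N (Ctx LM) X N' e.
Definition trL N N' (e : N = N') (S : LM 'I_N) : LM 'I_N' :=
  eq_rect N (fun n => LM 'I_n) S N' e.

Fixpoint pre k m (T : LM 'I_k) : Ext LM k.+1 m -> Ext LM k m.+1 :=
  match m return Ext LM k.+1 m -> Ext LM k m.+1 with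
  | 0 => fun _ => (tt, T)
  | S m => fun E => (pre T E.1, trL (addnS m k) E.2)
  end.

Lemma trC_pair N N' (e : N.+1 = N'.+1) (a : Ctx LM N) (b : LM 'I_N) :
  trC e ((a, b) : Ctx LM N.+1) = (trC (eq_add_S _ _ e) a, trL (eq_add_S _ _ e) b).
Proof.
move: (eq_add_S _ _ e) => e1; case: N' / e1 e => e.
by rewrite (eq_irrelevance e erefl).
Qed.

Lemma trLK N N' (e1 : N = N') (e2 : N' = N) x : trL e2 (trL e1 x) = x.
Proof. case: N' / e1 e2 => e2; by rewrite (eq_irrelevance e2 erefl). Qed.

Lemma catpre k m (H : Ctx LM k) T (E : Ext LM k.+1 m) (e : m.+1 + k = m + k.+1) :
  @cat_ctx R LM k.+1 m (H, T) E = trC e (@cat_ctx R LM k m.+1 H (pre T E)).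
Proof.
elim: m E e => [|m IH] E e /=.
  by rewrite (eq_irrelevance e erefl).
rewrite trC_pair (IH _ (eq_add_S _ _ e)) trLK //.
Qed.

Variable D : nat -> Type.
Variable P : forall N, Ctx LM N -> D N -> Prop.
Variable Ceq : forall n, Ctx LM n -> LM 'I_n -> LM 'I_n -> Prop.
Hypothesis H4 : forall n m (G1 : Ctx LM n) (T T' : LM 'I_n) (G2 : Ext LM n.+1 m) d,
  @Ceq n G1 T T' -> @P (m + n.+1) (@cat_ctx R LM n.+1 m (G1, T) G2) d ->
  @P (m + n.+1) (@cat_ctx R LM n.+1 m (G1, T') G2) d.

Definition trD N N' (e : N = N') (d : D N) : D N' := eq_rect N D d N' e.

Lemma trDK N N' (e1 : N = N') (e2 : N' = N) x : trD e2 (trD e1 x) = x.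
Proof. case: N' / e1 e2 => e2; by rewrite (eq_irrelevance e2 erefl). Qed.

Lemma trCK N N' (e1 : N = N') (e2 : N' = N) x : trC e2 (trC e1 x) = x.
Proof. case: N' / e1 e2 => e2; by rewrite (eq_irrelevance e2 erefl). Qed.

Lemma P_tr N N' (e : N = N') X d : P X d -> P (trC e X) (trD e d).
Proof. by case: N' / e. Qed.

Lemma transport k : forall m (G G' : Ctx LM k) (E : Ext LM k m) d,
  @ctx_sim R LM Ceq k G G' -> @P (m + k) (@cat_ctx R LM k m G E) d ->
  @P (m + k) (@cat_ctx R LM k m G' E) d.
Proof.
elim: k => [|k IH] m G G' E d.
  by case: G; case: G'.
case: G => H T; case: G' => H' T' /= [sHH' eTT'] hP.
have := H4 eTT' hP.
have e : m.+1 + k = m + k.+1 by rewrite addnS.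
rewrite !(catpre _ _ _ e) => hP'.
have := P_tr (esym e) hP'; rewrite trCK => hP2.
have := IH _ _ _ _ _ sHH' hP2 => /(P_tr e); rewrite trDK //.
Qed.

End Transport.

Theorem lemma6p4 (R : Monad) (LM : LModule R)
  (C : forall n, Ctx LM n -> Prop)
  (Ct : forall n, Ctx LM n -> LM 'I_n -> R 'I_n -> Prop)
  (Ceq : forall n, Ctx LM n -> LM 'I_n -> LM 'I_n -> Prop)
  (Ceqt : forall n, Ctx LM n -> LM 'I_n -> R 'I_n -> R 'I_n -> Prop) :
  let H12 := forall n (G : Ctx LM n) (T : LM 'I_n), C n.+1 (G, T) -> C n G in
  let H13 := forall n (G : Ctx LM n) (T : LM 'I_n) (r : R 'I_n),
      Ct n G T r -> C n.+1 (G, T) in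
  let H2b := forall n (G : Ctx LM n) (T : LM 'I_n), C n.+1 (G, T) -> Ceq n G T T in
  let H2c := forall n (G : Ctx LM n) (T T' : LM 'I_n), Ceq n G T T' -> Ceq n G T' T in
  let H2d := forall n (G : Ctx LM n) (T T' T'' : LM 'I_n),
      Ceq n G T T' -> Ceq n G T' T'' -> Ceq n G T T'' in
  let H3b := forall n (G : Ctx LM n) (T : LM 'I_n) (o : R 'I_n),
      Ct n G T o -> Ceqt n G T o o in
  let H3c := forall n (G : Ctx LM n) (T : LM 'I_n) (o o' : R 'I_n),
      Ceqt n G T o o' -> Ceqt n G T o' o in
  let H3d := forall n (G : Ctx LM n) (T : LM 'I_n) (o o' o'' : R 'I_n),
      Ceqt n G T o o' -> Ceqt n G T o' o'' -> Ceqt n G T o o'' in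
  let H4a := forall n m (G1 : Ctx LM n) (T T' : LM 'I_n) (G2 : Ext LM n.+1 m)
      (S S' : LM 'I_(m + n.+1)),
      Ceq n G1 T T' ->
      Ceq (m + n.+1) (@cat_ctx R LM n.+1 m (G1, T) G2) S S' ->
      Ceq (m + n.+1) (@cat_ctx R LM n.+1 m (G1, T') G2) S S' in
  let H4b := forall n m (G1 : Ctx LM n) (T T' : LM 'I_n) (G2 : Ext LM n.+1 m)
      (S : LM 'I_(m + n.+1)) (o o' : R 'I_(m + n.+1)),
      Ceq n G1 T T' ->
      Ceqt (m + n.+1) (@cat_ctx R LM n.+1 m (G1, T) G2) S o o' ->
      Ceqt (m + n.+1) (@cat_ctx R LM n.+1 m (G1, T') G2) S o o' in
  let H4c := forall n (G : Ctx LM n) (S S' : LM 'I_n) (o o' : R 'I_n),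
      Ceq n G S S' -> Ceqt n G S o o' -> Ceqt n G S' o o' in
  (H12 -> H2b -> H2c -> H2d -> H4a ->
     forall n, equiv_on (@C n) (@ctx_sim R LM Ceq n)) /\
  (H12 -> H2b -> H2c -> H2d -> H4a ->
   H13 -> H3b -> H3c -> H3d -> H4b -> H4c ->
     forall n, equiv_on (fun x : (Ctx LM n * LM 'I_n * R 'I_n)%type =>
                           Ct n x.1.1 x.1.2 x.2)
                        (@term_sim R LM Ceq Ceqt n)).
Proof.
move=> H12 H13 H2b H2c H2d H3b H3c H3d H4a H4b H4c.
have part1 : H12 -> H2b -> H2c -> H2d -> H4a ->
     forall n, equiv_on (@C n) (@ctx_sim R LM Ceq n).
  move=> h12 h2b h2c h2d h4a.
  have trE := @transport R LM (fun N => (LM 'I_N * LM 'I_N)%type)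
     (fun N X d => Ceq N X d.1 d.2) Ceq
     (fun n m G1 T T' G2 d => h4a n m G1 T T' G2 d.1 d.2).
  elim=> [|n IH]; first by split.
  case: IH => IHr IHs IHt.
  split.
  - case=> H T /= hC; split; [exact: IHr (h12 _ _ _ hC)| exact: h2b].
  - case=> H T [H' T'] /= hC hC' [s e].
    have sym := IHs _ _ (h12 _ _ _ hC) (h12 _ _ _ hC') s.
    split => //.
    exact: (trE n 0 H H' tt (T', T) s (h2c _ _ _ _ e)).
  - case=> H T [H' T'] [H'' T''] /= hC hC' hC'' [s e] [s' e'].
    split; first exact: IHt (h12 _ _ _ hC) (h12 _ _ _ hC') (h12 _ _ _ hC'') s s'.
    have sym := IHs _ _ (h12 _ _ _ hC) (h12 _ _ _ hC') s.
    apply: h2d e _.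
    exact: (trE n 0 H' H tt (T', T'') sym e').
split => //.
move=> h12 h2b h2c h2d h4a h13 h3b h3c h3d h4b h4c n.
have trT := @transport R LM (fun N => (LM 'I_N * R 'I_N * R 'I_N)%type)
     (fun N X d => Ceqt N X d.1.1 d.1.2 d.2) Ceq
     (fun n m G1 T T' G2 d => h4b n m G1 T T' G2 d.1.1 d.1.2 d.2).
case: (part1 h12 h2b h2c h2d h4a n.+1) => Pr Ps Pt.
split.
- case=> [[G T] o] /= hc; split; [exact: Pr (h13 _ _ _ _ hc) | exact: h3b].
- case=> [[G T] o] [[G' T'] o'] /= hc hc' [s e].
  split; first exact: Ps (h13 _ _ _ _ hc) (h13 _ _ _ _ hc') s.
  case: s => s0 eT.
  have := h4c _ _ _ _ _ _ eT (h3c _ _ _ _ _ e) => e2.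
  exact: (trT n 0 G G' tt (T', o', o) s0 e2).
- case=> [[G T] o] [[G' T'] o'] [[G'' T''] o''] /= hc hc' hc'' [s e] [s' e'].
  split; first exact: Pt (h13 _ _ _ _ hc) (h13 _ _ _ _ hc') (h13 _ _ _ _ hc'') s s'.
  have sym := Ps _ _ (h13 _ _ _ _ hc) (h13 _ _ _ _ hc') s.
  case: sym => sym0 eT'.
  have e2 := trT n 0 G' G tt (T', o', o'') sym0 e'.
  case: s => _ eT.
  exact: h3d e (h4c _ _ _ _ _ _ (h2c _ _ _ _ eT) e2).
Qed.
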